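(* Let $R$ be a $*$-reducing ring, let $p,q\in R$ be projections, and put $\overline{p}=1-p$, $\overline{q}=1-q$. Suppose that at least one of the following elements is MP invertible: $1-pq$, $1-pqp$, $p-pqp$, $p-pq$, $p-qp$, $1-qp$, $1-qpq$, $q-qpq$, $q-qp$, $q-pq$, $p+q-pq$, $p+\overline{p}q\overline{p}$, $\overline{p}q\overline{p}$, $p+q-qp$, $q+\overline{q}p\overline{q}$, $\overline{q}p\overline{q}$, $p(1-q)$, $p-q$, $(1-p)q$. (Then all of them are MP invertible.) Then (1) $(1-pq)^{\dagger}p\overline{q}p = p\overline{q}(p\overline{q}p)^{\dagger} = p\overline{q}p(1-qp)^{\dagger} = p(p\overline{q})^{\dagger} = (\overline{q}p)^{\dagger}p = p(p-q)^{\dagger}p$; (2) $(p+\overline{p}q)^{\dagger}\overline{p}q\overline{p} = (q+p\overline{q})^{\dagger}\overline{p}q\overline{p} = \overline{p}q(\overline{p}q\overline{p})^{\dagger} = \overline{p}q\overline{p}(p+q\overline{p})^{\dagger} = \overline{p}q\overline{p}(q+\overline{q}p)^{\dagger} = \overline{p}(\overline{p}q)^{\dagger} = (q\overline{p})^{\dagger}\overline{p} = \overline{p}(q-p)^{\dagger}\overline{p}$.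
   Context: $R$ is an associative ring with identity $1$ and an involution $a\mapsto a^*$ (satisfying $(a^* )^*=a$, $(a+b)^*=a^*+b^*$, $(ab)^*=b^*a^*$). $R$ is $*$-reducing if $a^*a=0$ implies $a=0$ for all $a\in R$. An element $a$ is MP invertible if there is $b$ with $aba=a$, $bab=b$, $(ab)^*=ab$, $(ba)^*=ba$; this $b$ is unique and written $a^{\dagger}$. A projection is an element $p$ with $p^2=p=p^*$. *)

(* Defs.v *)
From HB Require Import structures.
From mathcomp Require Import all_boot all_algebra.
From Stdlib Require Import ClassicalEpsilon.
Set Implicit Arguments. Unset Strict Implicit. Unset Printing Implicit Defensive.
Import GRing.Theory.
Local Open Scope ring_scope.

Definition is_involution (R : pzRingType) (star : R -> R) : Prop :=
  [/\ forall a, star (star a) = a,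
      forall a b, star (a + b) = star a + star b &
      forall a b, star (a * b) = star b * star a].

Definition star_reducing (R : pzRingType) (star : R -> R) : Prop :=
  forall a, star a * a = 0 -> a = 0.

Definition projection (R : pzRingType) (star : R -> R) (p : R) : Prop :=
  p * p = p /\ star p = p.

Definition is_MP (R : pzRingType) (star : R -> R) (a b : R) : Prop :=
  [/\ a * b * a = a, b * a * b = b,
      star (a * b) = a * b & star (b * a) = b * a].

Definition MP_invertible (R : pzRingType) (star : R -> R) (a : R) : Prop :=
  exists b, is_MP star a b.

(* a^dagger : the (unique) MP inverse of a when it exists (chosen by
   classical description; an unspecified value otherwise). *)
Definition mpinv (R : pzRingType) (star : R -> R) (a : R) : R :=
  epsilon (inhabits (0 : R)) (fun b => is_MP star a b).

(* Main.v *)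
Require Import Defs.
From HB Require Import structures.
From mathcomp Require Import all_boot all_algebra.
From Stdlib Require Import ClassicalEpsilon.
Import GRing.Theory.
Local Open Scope ring_scope.
Ltac sg := match goal with |- ?g => idtac g end.


Lemma star0 {R : pzRingType} {st : R -> R} : is_involution st -> st 0 = 0.
Proof.
case=> sK sD sM.
have := sD 0 0; rewrite addr0 => /eqP; rewrite -subr_eq addrN eq_sym => /eqP //.
Qed.

Lemma starN {R : pzRingType} {st : R -> R} : is_involution st -> forall a, st (- a) = - st a.
Proof.
move=> H a; have H0 := star0 H; case: H => sK sD sM.
apply/eqP; rewrite -subr_eq0 opprK -sD addNr H0 //.
Qed.

Lemma starB {R : pzRingType} {st : R -> R} : is_involution st -> forall a b, st (a - b) = st a - st b.
Proof. move=> H a b; have HN := starN H; case: H => sK sD sM. by rewrite sD HN. Qed.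

Lemma star1 {R : pzRingType} {st : R -> R} : is_involution st -> st 1 = 1.
Proof.
case=> sK sD sM.
have E : forall b, b = st 1 * b.
  move=> b; rewrite -{1}(sK b) -{1}(mulr1 (st b)) sM sK //.
by rewrite [RHS]E mulr1.
Qed.

Lemma MP_uniq {R : pzRingType} {st : R -> R} {a b c} :
  is_involution st -> is_MP st a b -> is_MP st a c -> b = c.
Proof.
case=> sK sD sM [b1 b2 b3 b4] [c1 c2 c3 c4].
have Eb : b = b * a * c.
  have E1 : st b * st a = a * b by rewrite -sM b3.
  have E2 : st c * st a = a * c by rewrite -sM c3.
  have E3 : st a = st a * st c * st a by rewrite -sM -sM mulrA c1.
  rewrite -{1}b2 -mulrA -E1 E3 !mulrA -(mulrA (b * st b * st a)) E2 -(mulrA b) E1.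
  by rewrite !mulrA b2.
have Ec : c = b * a * c.
  have E1 : st a * st b = b * a by rewrite -sM b4.
  have E2 : st a * st c = c * a by rewrite -sM c4.
  have E3 : st a = st a * st b * st a by rewrite -sM -sM mulrA b1.
  rewrite -{1}c2 -E2 E3 -(mulrA (st a * st b)) E2 E1 -!mulrA [c * (a * c)]mulrA c2 !mulrA //.
by rewrite Eb -Ec.
Qed.

Lemma dgE {R : pzRingType} {st : R -> R} {a b} :
  is_involution st -> is_MP st a b -> mpinv st a = b.
Proof.
move=> H Hb; apply: (@MP_uniq _ _ a _ b H _ Hb).
rewrite /mpinv; apply: epsilon_spec; by exists b.
Qed.

Lemma MP_star {R : pzRingType} {st : R -> R} {a b} :
  is_involution st -> is_MP st a b -> is_MP st (st a) (st b).
Proof.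
case=> sK sD sM [b1 b2 b3 b4]; split.
- by rewrite -!sM mulrA b1.
- by rewrite -!sM mulrA b2.
- by rewrite -sM b4.
- by rewrite -sM b3.
Qed.

Lemma MP_opp {R : pzRingType} {st : R -> R} {a b} :
  is_involution st -> is_MP st a b -> is_MP st (- a) (- b).
Proof.
move=> H [b1 b2 b3 b4]; split; rewrite ?mulrNN ?mulNr ?mulrN ?opprK ?b1 ?b2 //.
Qed.

Lemma MP_sa {R : pzRingType} {st : R -> R} {a b} :
  is_involution st -> st a = a -> is_MP st a b -> st b = b.
Proof.
move=> H Ha Hb; have := MP_star H Hb; rewrite Ha => Hb'.
exact: (MP_uniq H Hb' Hb).
Qed.


Inductive NE := NA of nat | N0 | N1 | NAdd of NE & NE | NOpp of NE | NMul of NE & NE.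

Fixpoint nev {R : pzRingType} (env : seq R) (e : NE) : R :=
  match e with
  | NA i => nth 0 env i
  | N0 => 0
  | N1 => 1
  | NAdd a b => nev env a + nev env b
  | NOpp a => - nev env a
  | NMul a b => nev env a * nev env b
  end.

Definition wev {R : pzRingType} (env : seq R) (w : seq nat) : R :=
  foldr (fun i acc => nth 0 env i * acc) 1 w.

Definition mulL (L1 L2 : seq (seq nat)) := [seq w1 ++ w2 | w1 <- L1, w2 <- L2].

Fixpoint norm (e : NE) : seq (seq nat) * seq (seq nat) :=
  match e with
  | NA i => ([:: [:: i]], [::])
  | N0 => ([::], [::])
  | N1 => ([:: [::]], [::])
  | NAdd a b => let (Pa, Na) := norm a in let (Pb, Nb) := norm b in (Pa ++ Pb, Na ++ Nb)
  | NOpp a => let (Pa, Na) := norm a in (Na, Pa)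
  | NMul a b => let (Pa, Na) := norm a in let (Pb, Nb) := norm b in
      (mulL Pa Pb ++ mulL Na Nb, mulL Pa Nb ++ mulL Na Pb)
  end.

Fixpoint red (k : nat) (w : seq nat) : seq nat :=
  match w with
  | i :: t => match t with
              | j :: _ => if (i == j) && (i < k)%N then red k t else i :: red k t
              | [::] => [:: i]
              end
  | [::] => [::]
  end.

Definition sL {R : pzRingType} (env : seq R) (L : seq (seq nat)) := \sum_(w <- L) wev env w.

Lemma wev_cat {R : pzRingType} (env : seq R) w1 w2 : wev env (w1 ++ w2) = wev env w1 * wev env w2.
Proof. elim: w1 => [|i w IH] /=; first by rewrite mul1r. by rewrite IH mulrA. Qed.

Lemma sL_cat {R : pzRingType} (env : seq R) L1 L2 : sL env (L1 ++ L2) = sL env L1 + sL env L2.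
Proof. by rewrite /sL big_cat. Qed.

Lemma sL_mul {R : pzRingType} (env : seq R) L1 L2 : sL env (mulL L1 L2) = sL env L1 * sL env L2.
Proof.
rewrite /sL /mulL big_allpairs_dep mulr_suml; apply: eq_bigr => w1 _.
rewrite mulr_sumr; apply: eq_bigr => w2 _; exact: wev_cat.
Qed.

Lemma norm_ok {R : pzRingType} (env : seq R) e :
  nev env e = sL env (norm e).1 - sL env (norm e).2.
Proof.
elim: e => [i| | |a IHa b IHb|a IHa|a IHa b IHb] /=.
- by rewrite /sL big_seq1 big_nil /= mulr1 subr0.
- by rewrite /sL !big_nil subr0.
- by rewrite /sL big_seq1 big_nil subr0.
- case: (norm a) IHa => Pa Na ->; case: (norm b) IHb => Pb Nb -> /=.
  rewrite !sL_cat opprD addrACA //.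
- case: (norm a) IHa => Pa Na -> /=. by rewrite opprB.
- case: (norm a) IHa => Pa Na ->; case: (norm b) IHb => Pb Nb -> /=.
  rewrite !sL_cat !sL_mul mulrBl !mulrBr.
  by rewrite opprB opprD !addrA; congr (_ + _); rewrite addrAC.
Qed.

Lemma red_ok {R : pzRingType} (env : seq R) k :
  (forall i, (i < k)%N -> nth 0 env i * nth 0 env i = nth 0 env i) ->
  forall w, wev env (red k w) = wev env w.
Proof.
move=> Hk; elim=> [|i t IH] //=.
case: t IH => [|j t] IH //=.
case: ifP => [/andP [/eqP eij ik]|_] /=.
- rewrite IH /= eij mulrA Hk //; by rewrite -eij.
- by rewrite IH.
Qed.

Lemma sL_red {R : pzRingType} (env : seq R) k L :
  (forall i, (i < k)%N -> nth 0 env i * nth 0 env i = nth 0 env i) ->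
  sL env (map (red k) L) = sL env L.
Proof. move=> Hk; rewrite /sL big_map; apply: eq_bigr => w _; exact: red_ok. Qed.

Definition ncheck (k : nat) (e1 e2 : NE) : bool :=
  let (P1, N1) := norm e1 in let (P2, N2) := norm e2 in
  perm_eq (map (red k) (P1 ++ N2)) (map (red k) (P2 ++ N1)).

Lemma ncheck_ok {R : pzRingType} (env : seq R) k e1 e2 :
  (forall i, (i < k)%N -> nth 0 env i * nth 0 env i = nth 0 env i) ->
  ncheck k e1 e2 -> nev env e1 = nev env e2.
Proof.
move=> Hk; rewrite /ncheck !norm_ok.
case: (norm e1) => P1 N1; case: (norm e2) => P2 N2 /= Hp.
have : sL env (map (red k) (P1 ++ N2)) = sL env (map (red k) (P2 ++ N1)).
  by rewrite /sL; apply: perm_big.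
rewrite !sL_red // !sL_cat => E.
by apply/eqP; rewrite subr_eq addrAC -E addrK.
Qed.


Ltac find_idx x l := lazymatch l with
 | x :: _ => constr:(0%N)
 | _ :: ?l' => let n := find_idx x l' in constr:(S n)
 end.
Ltac app l x := lazymatch l with
 | nil => constr:(x :: nil)
 | ?h :: ?t => let r := app t x in constr:(h :: r)
 end.
Ltac reify env t :=
 lazymatch t with
 | ?a + ?b => let r1 := reify env a in lazymatch r1 with (?e1, ?env1) =>
      let r2 := reify env1 b in lazymatch r2 with (?e2, ?env2) => constr:((NAdd e1 e2, env2)) end end
 | - ?a => let r1 := reify env a in lazymatch r1 with (?e1, ?env1) => constr:((NOpp e1, env1)) end
 | ?a * ?b => let r1 := reify env a in lazymatch r1 with (?e1, ?env1) =>
      let r2 := reify env1 b in lazymatch r2 with (?e2, ?env2) => constr:((NMul e1 e2, env2)) end end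
 | 0 => constr:((N0, env))
 | 1 => constr:((N1, env))
 | _ => match constr:(tt) with
        | _ => let n := find_idx t env in constr:((NA n, env))
        | _ => let env' := app env t in let n := find_idx t env' in constr:((NA n, env'))
        end
 end.
Ltac idem_side :=
  let i := fresh "i" in let Hi := fresh "Hi" in
  move=> i Hi; do 6 (destruct i as [|i]; [ first [ discriminate Hi | cbn [nth]; assumption ] | ]); discriminate Hi.
Ltac nc idems k :=
  lazymatch goal with |- ?l = ?r =>
   let r1 := reify idems l in lazymatch r1 with (?e1, ?env1) =>
   let r2 := reify env1 r in lazymatch r2 with (?e2, ?env2) =>
    change (nev env2 e1 = nev env2 e2); apply: (ncheck_ok env2 k); [ idem_side | vm_compute; reflexivity ]
   end end end.


Definition isc (k m i : nat) : bool := (k <= i)%N && (i < k + m)%N.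
Definition wnorm k m (w : seq nat) := red k (filter (fun i => ~~ isc k m i) w) ++ filter (isc k m) w.

Lemma comm_wev {R : pzRingType} (env : seq R) (c : R) (w : seq nat) (P : pred nat) :
  (forall j, P j -> c * nth 0 env j = nth 0 env j * c) -> all P w ->
  c * wev env w = wev env w * c.
Proof.
move=> Hc; elim: w => [|j w IH] /=; first by rewrite mul1r mulr1.
case/andP=> Pj Pw; by rewrite mulrA Hc // -mulrA IH // mulrA.
Qed.

Lemma wnorm_ok {R : pzRingType} (env : seq R) k m :
  (forall i, (i < k)%N -> nth 0 env i * nth 0 env i = nth 0 env i) ->
  (forall i j, isc k m i -> ~~ isc k m j -> nth 0 env i * nth 0 env j = nth 0 env j * nth 0 env i) ->
  forall w, wev env (wnorm k m w) = wev env w.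
Proof.
move=> Hk Hc w; rewrite /wnorm wev_cat red_ok //.
elim: w => [|i w IH] /=; first by rewrite mulr1.
case ci: (isc k m i) => /=.
- rewrite -IH !mulrA; congr (_ * _); symmetry.
  apply: (comm_wev _ _ _ (fun j => ~~ isc k m j)).
  + move=> j Hj; exact: Hc.
  + by rewrite all_filter; apply/allP => x _; apply/implyP.
- by rewrite -mulrA IH.
Qed.

Definition ncheck2 (k m : nat) (e1 e2 : NE) : bool :=
  let (P1, N1) := norm e1 in let (P2, N2) := norm e2 in
  perm_eq (map (wnorm k m) (P1 ++ N2)) (map (wnorm k m) (P2 ++ N1)).

Lemma ncheck2_ok {R : pzRingType} (env : seq R) k m e1 e2 :
  (forall i, (i < k)%N -> nth 0 env i * nth 0 env i = nth 0 env i) ->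
  (forall i j, isc k m i -> ~~ isc k m j -> nth 0 env i * nth 0 env j = nth 0 env j * nth 0 env i) ->
  ncheck2 k m e1 e2 -> nev env e1 = nev env e2.
Proof.
move=> Hk Hc; rewrite /ncheck2 !norm_ok.
case: (norm e1) => P1 N1; case: (norm e2) => P2 N2 /= Hp.
have : sL env (map (wnorm k m) (P1 ++ N2)) = sL env (map (wnorm k m) (P2 ++ N1)).
  by rewrite /sL; apply: perm_big.
have E0 : forall L, sL env (map (wnorm k m) L) = sL env L.
  by move=> L; rewrite /sL big_map; apply: eq_bigr => w _; exact: wnorm_ok.
rewrite !E0 !sL_cat => E.
by apply/eqP; rewrite subr_eq addrAC -E addrK.
Qed.

Ltac comm_side :=
  let i := fresh "i" in let j := fresh "j" in let Hi := fresh "Hi" in let Hj := fresh "Hj" in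
  move=> i j Hi Hj;
  do 10 (destruct i as [|i]; [ first [ discriminate Hi |
     do 12 (destruct j as [|j]; [ first [ discriminate Hj | cbn [nth];
        first [ reflexivity | assumption | symmetry; assumption | by rewrite mul0r mulr0 ] ] | ]);
     cbn [nth]; by rewrite mul0r mulr0 ] | ]);
  discriminate Hi.
Ltac app2 l1 l2 := lazymatch l1 with
 | nil => l2
 | ?h :: ?t => let r := app2 t l2 in constr:(h :: r)
 end.
Ltac ncc idems k cents m :=
  lazymatch goal with |- ?l = ?r =>
   let env0 := app2 idems cents in
   let r1 := reify env0 l in lazymatch r1 with (?e1, ?env1) =>
   let r2 := reify env1 r in lazymatch r2 with (?e2, ?env2) =>
    change (nev env2 e1 = nev env2 e2); apply: (ncheck2_ok env2 k m);
      [ idem_side | comm_side | vm_compute; reflexivity ]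
   end end end.
Ltac ncc_dbg idems k cents m :=
  lazymatch goal with |- ?l = ?r =>
   let env0 := app2 idems cents in
   let r1 := reify env0 l in lazymatch r1 with (?e1, ?env1) =>
   let r2 := reify env1 r in lazymatch r2 with (?e2, ?env2) =>
    change (nev env2 e1 = nev env2 e2); apply: (ncheck2_ok env2 k m)
   end end end.




Lemma tl2 {R : pzRingType} {u v w : R} : u * v = w -> forall t, u * (v * t) = w * t.
Proof. by move=> E t; rewrite mulrA E. Qed.
Lemma tl3 {R : pzRingType} {u v z w : R} : u * v * z = w -> forall t, u * (v * (z * t)) = w * t.
Proof. by move=> E t; rewrite !mulrA E. Qed.
Lemma rA3 {R : pzRingType} {u v z w : R} : u * v * z = w -> u * (v * z) = w.
Proof. by rewrite mulrA. Qed.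

Lemma tl4 {R : pzRingType} {u v z y w : R} : u * v * z * y = w -> forall t, u * (v * (z * (y * t))) = w * t.
Proof. by move=> E t; rewrite !mulrA E. Qed.
Lemma rA4 {R : pzRingType} {u v z y w : R} : u * v * z * y = w -> u * (v * (z * y)) = w.
Proof. by rewrite !mulrA. Qed.
Ltac ra := rewrite -?mulrA.
Ltac rw E := lazymatch type of E with
  | _ * _ * _ * _ = _ => first [ rewrite (tl4 E) | rewrite (rA4 E) ]
  | _ * _ * _ = _ => first [ rewrite (tl3 E) | rewrite (rA3 E) ]
  | _ * _ = _ => first [ rewrite (tl2 E) | rewrite E ]
  end; rewrite -?mulrA //.

Lemma MP_comm {R : pzRingType} {st : R -> R} {a b} x :
  is_involution st -> st a = a -> is_MP st a b -> x * a = a * x -> st x = x ->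
  x * b = b * x.
Proof.
move=> H Ha Hb xa sx.
have bs : st b = b := MP_sa H Ha Hb.
case: H => sK sD sM; case: Hb => b1 b2 b3 b4.
have ab_ba : a * b = b * a by rewrite -b3 sM bs Ha.
have E1 : x * (a * b) = a * b * x * (a * b).
  by rewrite -!mulrA (tl2 xa) -?mulrA (tl3 b1) -?mulrA.
have E2 : a * b * x = a * b * x * (a * b).
  have := f_equal st E1; rewrite !sM sx !bs Ha.
  by rewrite -ab_ba !mulrA.
have bE : b = b * (a * b) by rewrite mulrA b2.
have Ec : a * b * x = x * (a * b) by rewrite E2 -E1.
symmetry; rewrite {1}bE -mulrA Ec !mulrA -(mulrA b x a) xa mulrA -ab_ba Ec ab_ba -mulrA b2 //.
Qed.

Lemma MP_of_aas {R : pzRingType} {st : R -> R} {a z} :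
  is_involution st -> star_reducing st -> is_MP st (a * st a) z ->
  is_MP st a (st a * z).
Proof.
move=> H Hr Hz.
have cs : st (a * st a) = a * st a by case: H => sK sD sM; rewrite sM sK.
have zs : st z = z := MP_sa H cs Hz.
have HN := starN H; have HB := starB H.
case: H => sK sD sM; case: Hz => z1 z2 z3 z4.
have zc : z * (a * st a) = a * st a * z by rewrite -z4 sM zs cs.
have ga : a * st a * z * a = a.
  set c := a * st a in cs zc z1 z2 z3 z4 *.
  have gc : c * z * c = c := z1.
  have cg : c * (z * c) = c by rewrite mulrA.
  have Hd : st (c * z * a - a) = 0.
    apply: Hr; rewrite sK HB !sM zs sK -/c mulrBr !mulrBl.
    have E1 : c * z * a * (st a * (z * c)) = c.
      by rewrite mulrA -(mulrA (c * z) a (st a)) -/c gc cg.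
    have E2 : c * z * a * st a = c by rewrite -(mulrA (c * z) a) -/c gc.
    have E3 : a * (st a * (z * c)) = c by rewrite mulrA -/c cg.
    by rewrite E1 E2 E3 -/c !subrr.
  by apply/eqP; rewrite -subr_eq0; apply/eqP; rewrite -[LHS]sK Hd (star0 (And3 sK sD sM)).
split.
- by rewrite mulrA ga.
- by rewrite -!mulrA (mulrA a) (mulrA z) z2.
- by rewrite mulrA sM zs cs zc.
- by rewrite !sM sK zs mulrA.
Qed.

Lemma MP_aas {R : pzRingType} {st : R -> R} {a b} :
  is_involution st -> is_MP st a b -> is_MP st (a * st a) (st b * b).
Proof.
case=> sK sD sM [b1 b2 b3 b4].
have E1 : st a * st b = b * a by rewrite -sM b4.
have E2 : st b * st a = a * b by rewrite -sM b3.
split.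
- ra; rw E1; rw b1; rw b1.
- ra; rw E1; rw b2; rw b2.
- ra; rw E1; rw b2; exact: b3.
- have X : st b * b * (a * st a) = a * b.
    rewrite mulrA -(mulrA (st b) b a) -E1 mulrA E2 -mulrA E2 mulrA b1 //.
  by rewrite X b3.
Qed.


Lemma MP_1314 {R : pzRingType} {st : R -> R} {a x z} :
  is_involution st -> a * x * a = a -> st (x * a) = x * a ->
  a * z * a = a -> st (a * z) = a * z -> is_MP st a (x * a * z).
Proof.
move=> H x1 x4 z1 z3; split.
- by ra; rw x1; rw z1.
- by ra; rw z1; rw x1.
- by rewrite !mulrA x1.
- by ra; rw z1; rewrite -mulrA.
Qed.

Lemma MP_corner {R : pzRingType} {st : R -> R} {a y p} :
  is_involution st -> st a = a -> st p = p -> p * p = p -> p * a = a * p ->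
  is_MP st a y -> is_MP st (p * a) (p * y).
Proof.
move=> H sa sp pp pa Hy.
have py : p * y = y * p := MP_comm p H sa Hy pa sp.
have ap : a * p = p * a by rewrite pa.
have yp : y * p = p * y by rewrite py.
case: H => sK sD sM; case: Hy => y1 y2 y3 y4.
have F1 : p * a * (p * y) = p * (a * y) by ra; rw ap; rw pp.
have F2 : p * y * (p * a) = p * (y * a) by ra; rw yp; rw pp.
split.
- by rewrite F1; ra; rw yp; rw ap; rw pp; rw y1.
- by rewrite F2; ra; rw ap; rw yp; rw pp; rw y2.
- rewrite F1 sM y3 sp; ra; rw yp; rw ap.
- rewrite F2 sM y4 sp; ra; rw ap; rw yp.
Qed.

Lemma MP_sum {R : pzRingType} {st : R -> R} {a P Q v w} :
  is_involution st -> st a = a -> st P = P -> st Q = Q -> P * P = P -> Q * Q = Q ->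
  P * Q = 0 -> Q * P = 0 -> P + Q = 1 -> P * a = a * P -> Q * a = a * Q ->
  is_MP st (P * a) v -> is_MP st (Q * a) w -> is_MP st a (v + w).
Proof.
move=> H sa sP sQ PP QQ PQ QP PQ1 Pa Qa Hv Hw.
have aP : a * P = P * a by rewrite Pa.
have aQ : a * Q = Q * a by rewrite Qa.
have sA : st (P * a) = P * a by case: H => sK sD sM; rewrite sM sa sP aP.
have sB : st (Q * a) = Q * a by case: H => sK sD sM; rewrite sM sa sQ aQ.
have vP : P * v = v * P.
  apply: (MP_comm P H sA Hv _ sP); by ra; rw aP; rw PP.
have vQ : Q * v = v * Q.
  apply: (MP_comm Q H sA Hv _ sQ); by ra; rw aQ; rw QP; rw PQ; rewrite mul0r mulr0.
have wQ : Q * w = w * Q.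
  apply: (MP_comm Q H sB Hw _ sQ); by ra; rw aQ; rw QQ.
have wP : P * w = w * P.
  apply: (MP_comm P H sB Hw _ sP); by ra; rw aP; rw PQ; rw QP; rewrite mul0r mulr0.
case: Hv => v1 v2 v3 v4; case: Hw => w1 w2 w3 w4.
have vQ0 : v * Q = 0.
  rewrite -{1}v2; ra; rw (esym vQ); rw aQ; rw PQ; by rewrite mul0r mulr0.
have wP0 : w * P = 0.
  rewrite -{1}w2; ra; rw (esym wP); rw aP; rw QP; by rewrite mul0r mulr0.
have Pw0 : P * w = 0 by rewrite wP wP0.
have Qv0 : Q * v = 0 by rewrite vQ vQ0.
have Aw : P * a * w = 0 by ra; rw Pa; rewrite Pw0 mulr0.
have Bv : Q * a * v = 0 by ra; rw Qa; rewrite Qv0 mulr0.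
have vB : v * (Q * a) = 0 by rewrite mulrA vQ0 mul0r.
have wA : w * (P * a) = 0 by rewrite mulrA wP0 mul0r.
have aE : a = P * a + Q * a by rewrite -mulrDl PQ1 mul1r.
have L : a * (v + w) = P * a * v + Q * a * w.
  by rewrite {1}aE mulrDl !mulrDr Aw Bv addr0 add0r.
have Rr : (v + w) * a = v * (P * a) + w * (Q * a).
  by rewrite {1}aE mulrDl !mulrDr vB wA addr0 add0r.
split.
- have X1 : Q * a * w * (P * a) = 0 by rewrite -mulrA wA mulr0.
  have X2 : P * a * v * (Q * a) = 0 by rewrite -mulrA vB mulr0.
  rewrite L {3}aE mulrDr !mulrDl X1 X2 addr0 add0r v1 w1 -aE //.
- rewrite Rr mulrDr !mulrDl -!(mulrA v) -!(mulrA w) Aw Bv !mulr0 addr0 add0r.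
  by rewrite (mulrA v) (mulrA w) v2 w2.
- by case: H => sK sD sM; rewrite L sD v3 w3.
- by case: H => sK sD sM; rewrite Rr sD v4 w4.
Qed.


Lemma stM3 {R : pzRingType} {st : R -> R} a b c :
  is_involution st -> st (a * b * c) = st c * st b * st a.
Proof. by case=> sK sD sM; rewrite !sM mulrA. Qed.

Lemma st1B {R : pzRingType} {st : R -> R} p :
  is_involution st -> st p = p -> st (1 - p) = 1 - p.
Proof. by move=> H sp; rewrite (starB H) (star1 H) sp. Qed.

Lemma lemX {R : pzRingType} {st : R -> R} {p q v} :
  is_involution st -> star_reducing st -> p * p = p -> q * q = q -> st p = p -> st q = q ->
  is_MP st (p - p * q * p) v -> MP_invertible st ((1 - p) * q * (1 - p)).
Proof.
move=> H Hr pp qq sp sq Hv.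
have sp' := st1B _ H sp.
have sA : st (p - p * q * p) = p - p * q * p by rewrite (starB H) (stM3 _ _ _ H) sp sq.
have sB : st ((1 - p) * q * (1 - p)) = (1 - p) * q * (1 - p) by rewrite (stM3 _ _ _ H) sp' sq.
have sx : st ((1 - p) * q * p) = p * q * (1 - p) by rewrite (stM3 _ _ _ H) sp' sq sp.
have sxs : st (p * q * (1 - p)) = (1 - p) * q * p by rewrite (stM3 _ _ _ H) sp' sq sp.
have F2 : p * q * (1 - p) * ((1 - p) * q * p) = (p - p * q * p) - (p - p * q * p) * (p - p * q * p).
  by nc [:: p; q] 2%N.
have F3 : (1 - p) * q * p * (p * q * (1 - p)) = (1 - p) * q * (1 - p) - (1 - p) * q * (1 - p) * ((1 - p) * q * (1 - p)).
  by nc [:: p; q] 2%N.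
have F4 : (1 - p) * q * (1 - p) * ((1 - p) * q * p) = (1 - p) * q * p * (p - p * q * p).
  by nc [:: p; q] 2%N.
have F4' : p * q * (1 - p) * ((1 - p) * q * (1 - p)) = (p - p * q * p) * (p * q * (1 - p)).
  by nc [:: p; q] 2%N.
have B1p : (1 - p) * q * (1 - p) * (1 - p) = (1 - p) * q * (1 - p) by nc [:: p; q] 2%N.
have vs : st v = v := MP_sa H sA Hv.
move: sA sB sx sxs F2 F3 F4 F4' B1p Hv.
set A := p - p * q * p; set B := (1 - p) * q * (1 - p); set x := (1 - p) * q * p;
  set xs := p * q * (1 - p).
move=> sA sB sx sxs F2 F3 F4 F4' B1p Hv.
clearbody A B x xs.
case: (Hv) => v1 v2 v3 v4.
case: (H) => sK sD sM.
have Av : A * v = v * A by rewrite -v3 sM vs sA.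
have x0 : x * (1 - v * A) = 0.
  apply: Hr.
  have -> : st (x * (1 - v * A)) * (x * (1 - v * A)) = (1 - v * A) * (xs * x) * (1 - v * A).
    by rewrite sM (starB H) (star1 H) v4 sx !mulrA.
  rewrite F2.
  have -> : (1 - v * A) * (A - A * A) * (1 - v * A) = (1 - v * A) * ((A - A * v * A) - A * (A - A * v * A)).
    by nc [:: p; q] 2%N.
  by rewrite v1 subrr mulr0 subrr mulr0.
have xvA : x * v * A = x.
  by move/eqP: x0; rewrite mulrBr mulr1 subr_eq0 mulrA => /eqP <-.
have [m mE] : {m | m = (1 - p) + x * v * v * xs} by eexists.
have [E EE] : {E | E = B + x * v * xs} by eexists.
have Bm : B * m = E.
  rewrite mE EE mulrDr B1p; congr (_ + _).
  by ra; rw F4; rw Av; rw v2.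
have sm : st m = m by rewrite mE sD sp' !sM sxs sx vs !mulrA.
have sE : st E = E by rewrite EE sD sB !sM sxs sx vs !mulrA.
have EB : E * B = B.
  rewrite EE mulrDl; ra; rw F4'; rw xvA; rw F3.
  by rewrite addrC subrK.
have mB : m * B = E by rewrite -sE -Bm sM sB sm.
have BE : B * E = B by rewrite -{1}sB -sE -sM EB sB.
have EE2 : E * E = E by rewrite -{2}Bm mulrA EB Bm.
exists (m * B * m); split.
- by rewrite !mulrA Bm EB Bm EB.
- by rewrite -!mulrA; rw Bm; rw Bm; rewrite Bm !EE2.
- by rewrite !mulrA Bm EB Bm sE.
- by rewrite mB -mulrA mB EE2 sE.
Qed.

Lemma kMP_of_A {R : pzRingType} {st : R -> R} {p q} :
  is_involution st -> star_reducing st -> p * p = p -> q * q = q -> st p = p -> st q = q ->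
  MP_invertible st (p - p * q * p) -> MP_invertible st (p + q - p * q - q * p).
Proof.
move=> H Hr pp qq sp sq [v Hv].
have [w Hw] := lemX H Hr pp qq sp sq Hv.
have sp' := st1B _ H sp.
case: (H) => sK sD sM.
have sk : st (p + q - p * q - q * p) = p + q - p * q - q * p.
  by rewrite !(starB H) sD !sM sp sq; nc [:: p; q] 2%N.
exists (v + w); apply: (MP_sum H sk sp sp' _ _ _ _ _ _ _ _ _).
- exact: pp.
- by nc [:: p; q] 2%N.
- by nc [:: p; q] 2%N.
- by nc [:: p; q] 2%N.
- by nc [:: p; q] 2%N.
- by nc [:: p; q] 2%N.
- by nc [:: p; q] 2%N.
- by have -> : p * (p + q - p * q - q * p) = p - p * q * p by nc [:: p; q] 2%N.
- by have -> : (1 - p) * (p + q - p * q - q * p) = (1 - p) * q * (1 - p) by nc [:: p; q] 2%N.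
Qed.


Lemma caseC {R : pzRingType} {st : R -> R} {p q y} :
  is_involution st -> p * p = p -> q * q = q -> st p = p -> st q = q ->
  is_MP st (1 - p * q) y -> MP_invertible st (p - p * q * p).
Proof.
move=> H pp qq sp sq Hy.
case: (H) => sK sD sM.
have sp' := st1B _ H sp.
case: (Hy) => y1 y2 y3 y4.
have [g gE] : {g | g = y * (1 - p * q)} by eexists.
have wg : (1 - p * q) * g = 1 - p * q by rewrite gE mulrA y1.
have sg1 : st g = g by rewrite gE y4.
have h0 : (1 - p) * (1 - g) = 0.
  have -> : (1 - p) * (1 - g) = (1 - p) * ((1 - p * q) - (1 - p * q) * g) by nc [:: p; q] 2%N.
  by rewrite wg subrr mulr0.
have pg : p * g = g * p.
  have E1 : p * (1 - g) = 1 - g.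
    by apply/eqP; rewrite -subr_eq0 -[X in _ - X]mul1r -mulrBl -opprB mulNr h0 oppr0.
  have E2 : (1 - g) * p = 1 - g by rewrite -[LHS]sK sM sp (st1B _ H sg1) E1 (st1B _ H sg1).
  have e1 : p * g = p - p * (1 - g) by nc [:: p; q] 2%N.
  have e2 : g * p = p - (1 - g) * p by nc [:: p; q] 2%N.
  by rewrite e1 e2 E1 E2.
pose x := p * y * p.
have AE : p - p * q * p = (1 - p * q) * p by nc [:: p; q] 2%N.
have AxA : (p - p * q * p) * x * (p - p * q * p) = p - p * q * p.
  rewrite AE /x.
  have -> : (1 - p * q) * p * (p * y * p) * ((1 - p * q) * p) = (1 - p * q) * (p * (y * (1 - p * q))) * p.
    by nc [:: p; q] 2%N.
  by rewrite -gE pg mulrA wg -mulrA pp.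
have xA : x * (p - p * q * p) = p * g.
  have -> : x * (p - p * q * p) = p * (y * (1 - p * q)) * p by rewrite /x; nc [:: p; q] 2%N.
  by rewrite -gE -mulrA -pg mulrA pp.
have sA : st (p - p * q * p) = p - p * q * p by rewrite (starB H) (stM3 _ _ _ H) sp sq.
exists (x * (p - p * q * p) * st x); apply: (MP_1314 H AxA).
- by rewrite xA sM sg1 sp pg.
- by have := f_equal st AxA; rewrite (stM3 _ _ _ H) sA.
- by rewrite sM sK sA xA -{1}sA -sM xA sM sg1 sp pg.
Qed.

Lemma kMP_base {R : pzRingType} {st : R -> R} {p q} :
  is_involution st -> star_reducing st -> p * p = p -> q * q = q -> st p = p -> st q = q ->
  MP_invertible st (p * (1 - q)) \/ MP_invertible st ((1 - q) * p) \/
      MP_invertible st (p * (1 - q) * p) \/ MP_invertible st (1 - p * q) \/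
      MP_invertible st (1 - q * p) \/ MP_invertible st (1 - p * q * p) \/
      MP_invertible st (p - q) ->
  MP_invertible st (p + q - p * q - q * p).
Proof.
move=> H Hr pp qq sp sq.
case: (H) => sK sD sM.
have sq' := st1B _ H sq.
have KA := kMP_of_A H Hr pp qq sp sq.
have c1 : MP_invertible st (p * (1 - q)) -> MP_invertible st (p + q - p * q - q * p).
  case=> b Hb; apply: KA; exists (st b * b).
  have := MP_aas H Hb; rewrite sM sq' sp.
  by have -> : p * (1 - q) * ((1 - q) * p) = p - p * q * p by nc [:: p; q] 2%N.
have c4 : MP_invertible st (1 - p * q) -> MP_invertible st (p + q - p * q - q * p).
  by case=> y Hy; apply: KA; exact: (caseC H pp qq sp sq Hy).
case; [|case; [|case; [|case; [|case; [|case]]]]].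
- exact: c1.
- case=> b Hb; apply: c1; exists (st b); have := MP_star H Hb; by rewrite sM sq' sp.
- case=> b Hb; apply: KA; exists b.
  by have <- : p * (1 - q) * p = p - p * q * p by nc [:: p; q] 2%N.
- exact: c4.
- case=> b Hb; apply: c4; exists (st b); have := MP_star H Hb.
  by rewrite (starB H) (star1 H) sM sp sq.
- case=> y Hy; apply: KA; exists (p * y).
  have sa : st (1 - p * q * p) = 1 - p * q * p by rewrite (st1B _ H) // (stM3 _ _ _ H) sp sq.
  have := MP_corner H sa sp pp _ Hy.
  have -> : p * (1 - p * q * p) = p - p * q * p by nc [:: p; q] 2%N.
  apply; by nc [:: p; q] 2%N.
- case=> b Hb; exists (st b * b); have := MP_aas H Hb.
  rewrite (starB H) sp sq.
  by have -> : (p - q) * (p - q) = p + q - p * q - q * p by nc [:: p; q] 2%N.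
Qed.


Lemma u_facts {R : pzRingType} {st : R -> R} {P Q u} :
  is_involution st -> P * P = P -> Q * Q = Q -> st P = P -> st Q = Q ->
  is_MP st (P + Q - P * Q - Q * P) u ->
  [/\ st (P + Q - P * Q - Q * P) = P + Q - P * Q - Q * P, st u = u,
      u * P = P * u & u * Q = Q * u].
Proof.
move=> H PP QQ sP sQ Hu; case: (H) => sK sD sM.
have sk : st (P + Q - P * Q - Q * P) = P + Q - P * Q - Q * P.
  by rewrite !(starB H) sD !sM sP sQ; nc [:: P; Q] 2%N.
split => //.
- exact: (MP_sa H sk Hu).
- symmetry; apply: (MP_comm P H sk Hu _ sP); by nc [:: P; Q] 2%N.
- symmetry; apply: (MP_comm Q H sk Hu _ sQ); by nc [:: P; Q] 2%N.
Qed.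

Lemma lemL {R : pzRingType} {st : R -> R} {P Q u} :
  is_involution st -> star_reducing st -> P * P = P -> Q * Q = Q -> st P = P -> st Q = Q ->
  is_MP st (P + Q - P * Q - Q * P) u ->
  exists y, is_MP st (1 - P * Q) y /\ y * (P - P * Q * P) = (P - P * Q * P) * u.
Proof.
move=> H Hr PP QQ sP sQ Hu.
have [sk us uP uQ] := u_facts H PP QQ sP sQ Hu.
case: (H) => sK sD sM.
case: (Hu) => u1 u2 u3 u4.
move: sk u1 u2 u3 u4.
have [k kE] : {k | k = P + Q - P * Q - Q * P} by eexists.
rewrite -kE => sk u1 u2 u3 u4.
have ku : k * u = u * k by rewrite -u3 sM sk us.
have [e eE] : {e | e = k * u} by eexists.
have eP : e * P = P * e by rewrite eE kE; ncc [:: P; Q] 2%N [:: u] 1%N.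
have eQ : e * Q = Q * e by rewrite eE kE; ncc [:: P; Q] 2%N [:: u] 1%N.
have es : st e = e by rewrite eE u3.
have ee : e * e = e by rewrite eE mulrA u1.
have eu : e * u = u by rewrite eE ku u2.
have ke : k * e = k by rewrite eE ku mulrA u1.
have QeP : Q * (1 - e) = P * (1 - e).
  have : (P - Q) * (1 - e) = 0.
    apply: Hr.
    rewrite sM (starB H) (star1 H) es (starB H) sP sQ.
    have -> : (1 - e) * (P - Q) * ((P - Q) * (1 - e)) = (1 - e) * ((P + Q - P * Q - Q * P) - (P + Q - P * Q - Q * P) * e).
      by ncc [:: P; Q] 2%N [:: e] 1%N.
    by rewrite -kE ke subrr mulr0.
  by rewrite mulrBl => /eqP; rewrite subr_eq0 => /eqP.
have uk : u * k = k * u by rewrite ku.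
have ue : u * e = e * u by rewrite eE mulrA uk.
set y := 1 - P * Q + P * Q * (u + e).
have [g gE] : {g | g = 1 - P * (1 - e)} by eexists.
have wy : (1 - P * Q) * y = g.
  have -> : (1 - P * Q) * y = 1 - P * Q - P * Q * k + P * Q * (k * u) + P * Q * (k * e).
    by rewrite /y kE; ncc [:: P; Q] 2%N [:: u; e] 2%N.
  rewrite -eE ke gE.
  have -> : 1 - P * Q - P * Q * k + P * Q * e + P * Q * k = 1 - P * (Q * (1 - e)) by nc [:: P; Q] 2%N.
  by rewrite QeP; nc [:: P; Q] 2%N.
have yw : y * (1 - P * Q) = g.
  rewrite -wy /y; ncc [:: P; Q] 2%N [:: u; e] 2%N.
have sg : st g = g.
  by rewrite gE (starB H) (star1 H) sM (starB H) (star1 H) es sP; ncc [:: P] 1%N [:: e] 1%N.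
have gw : g * (1 - P * Q) = 1 - P * Q.
  have -> : g * (1 - P * Q) = 1 - P * Q - P * (1 - e) + P * (Q * (1 - e)) by rewrite gE; ncc [:: P; Q] 2%N [:: e] 1%N.
  by rewrite QeP; nc [:: P; Q] 2%N.
have gy : g * y = y.
  have -> : g * y = y - P * (1 - e) + P * (Q * (1 - e)) - P * (Q * (1 - e)) * (u + e).
    by rewrite gE /y; ncc [:: P; Q] 2%N [:: u; e] 2%N.
  rewrite QeP.
  have -> : P * (P * (1 - e)) * (u + e) = P * (u + e - e * u - e * e) by ncc [:: P] 1%N [:: u; e] 2%N.
  rewrite eu ee.
  have -> : u + e - u - e = 0 by nc (Nil R) 0%N.
  by rewrite mulr0 subr0; nc [:: P; Q] 2%N.
exists y; split.
- split.
  + by rewrite wy gw.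
  + by rewrite yw gy.
  + by rewrite wy sg.
  + by rewrite yw sg.
- have -> : P - P * Q * P = (1 - P * Q) * P by nc [:: P; Q] 2%N.
  rewrite mulrA yw gE.
  have -> : (1 - P * Q) * P * u = P * (k * u) by rewrite kE; ncc [:: P; Q] 2%N [:: u] 1%N.
  by rewrite -eE; ncc [:: P] 1%N [:: e] 1%N.
Qed.


Lemma MPeq {R : pzRingType} {st : R -> R} {x y} : x = y -> MP_invertible st x -> MP_invertible st y.
Proof. by move=> ->. Qed.

Lemma kMP_all {R : pzRingType} {st : R -> R} {p q} :
  is_involution st -> star_reducing st -> p * p = p -> q * q = q -> st p = p -> st q = q ->
  (exists2 x,
     x \in [:: 1 - p * q; 1 - p * q * p; p - p * q * p; p - p * q; p - q * p;
               1 - q * p; 1 - q * p * q; q - q * p * q; q - q * p; q - p * q;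
               p + q - p * q; p + (1 - p) * q * (1 - p); (1 - p) * q * (1 - p);
               p + q - q * p; q + (1 - q) * p * (1 - q); (1 - q) * p * (1 - q);
               p * (1 - q); p - q; (1 - p) * q]
     & MP_invertible st x) ->
  MP_invertible st (p + q - p * q - q * p).
Proof.
move=> H Hr pp qq sp sq [x Hx Mx].
have pp' : (1 - p) * (1 - p) = 1 - p by nc [:: p] 1%N.
have qq' : (1 - q) * (1 - q) = 1 - q by nc [:: q] 1%N.
have sp' := st1B _ H sp.
have sq' := st1B _ H sq.
have B1 := kMP_base H Hr pp qq sp sq.
have k2 : q + p - q * p - p * q = p + q - p * q - q * p by nc [:: p; q] 2%N.
have k3 : (1 - p) + (1 - q) - (1 - p) * (1 - q) - (1 - q) * (1 - p) = p + q - p * q - q * p by nc [:: p; q] 2%N.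
have k4 : (1 - q) + (1 - p) - (1 - q) * (1 - p) - (1 - p) * (1 - q) = p + q - p * q - q * p by nc [:: p; q] 2%N.
have B2 := kMP_base H Hr qq pp sq sp; rewrite k2 in B2.
have B3 := kMP_base H Hr pp' qq' sp' sq'; rewrite k3 in B3.
have B4 := kMP_base H Hr qq' pp' sq' sp'; rewrite k4 in B4.
move: Hx Mx; rewrite !inE.
case/orP => [/eqP-> Mx|]; first by (apply: B1; do 3 right; left).
case/orP => [/eqP-> Mx|]; first by (apply: B1; do 5 right; left).
case/orP => [/eqP-> Mx|]; first by (apply: B1; do 2 right; left; apply: (MPeq _ Mx); by nc [:: p; q] 2%N).
case/orP => [/eqP-> Mx|]; first by (apply: B1; left; apply: (MPeq _ Mx); by nc [:: p; q] 2%N).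
case/orP => [/eqP-> Mx|]; first by (apply: B1; right; left; apply: (MPeq _ Mx); by nc [:: p; q] 2%N).
case/orP => [/eqP-> Mx|]; first by (apply: B1; do 4 right; left).
case/orP => [/eqP-> Mx|]; first by (apply: B2; do 5 right; left).
case/orP => [/eqP-> Mx|]; first by (apply: B2; do 2 right; left; apply: (MPeq _ Mx); by nc [:: p; q] 2%N).
case/orP => [/eqP-> Mx|]; first by (apply: B2; left; apply: (MPeq _ Mx); by nc [:: p; q] 2%N).
case/orP => [/eqP-> Mx|]; first by (apply: B2; right; left; apply: (MPeq _ Mx); by nc [:: p; q] 2%N).
case/orP => [/eqP-> Mx|]; first by (apply: B3; do 3 right; left; apply: (MPeq _ Mx); by nc [:: p; q] 2%N).
case/orP => [/eqP-> Mx|]; first by (apply: B3; do 5 right; left; apply: (MPeq _ Mx); by nc [:: p; q] 2%N).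
case/orP => [/eqP-> Mx|]; first by (apply: B3; do 2 right; left; apply: (MPeq _ Mx); by nc [:: p; q] 2%N).
case/orP => [/eqP-> Mx|]; first by (apply: B3; do 4 right; left; apply: (MPeq _ Mx); by nc [:: p; q] 2%N).
case/orP => [/eqP-> Mx|]; first by (apply: B4; do 5 right; left; apply: (MPeq _ Mx); by nc [:: p; q] 2%N).
case/orP => [/eqP-> Mx|]; first by (apply: B4; do 2 right; left; apply: (MPeq _ Mx); by nc [:: p; q] 2%N).
case/orP => [/eqP-> Mx|]; first by (apply: B1; left).
case/orP => [/eqP-> Mx|]; first by (apply: B1; do 6 right).
move/eqP-> => Mx; by (apply: B2; right; left; apply: (MPeq _ Mx); by nc [:: p; q] 2%N).
Qed.

Theorem corollary2p9 (R : pzRingType) (star : R -> R) (p q : R)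
  (Hinv : is_involution star) (Hred : star_reducing star)
  (Hp : projection star p) (Hq : projection star q)
  (Hsome : exists2 x,
     x \in [:: 1 - p * q; 1 - p * q * p; p - p * q * p; p - p * q; p - q * p;
               1 - q * p; 1 - q * p * q; q - q * p * q; q - q * p; q - p * q;
               p + q - p * q; p + (1 - p) * q * (1 - p); (1 - p) * q * (1 - p);
               p + q - q * p; q + (1 - q) * p * (1 - q); (1 - q) * p * (1 - q);
               p * (1 - q); p - q; (1 - p) * q]
     & MP_invertible star x) :
  let dg := mpinv star in
  let pb := 1 - p in
  let qb := 1 - q in
  (* (1) *)
  [/\ dg (1 - p * q) * (p * qb * p) = p * qb * dg (p * qb * p),
      p * qb * dg (p * qb * p) = p * qb * p * dg (1 - q * p),
      p * qb * p * dg (1 - q * p) = p * dg (p * qb),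
      p * dg (p * qb) = dg (qb * p) * p &
      dg (qb * p) * p = p * dg (p - q) * p] /\
  (* (2) *)
  (dg (p + pb * q) * (pb * q * pb) = dg (q + p * qb) * (pb * q * pb)
  /\ dg (q + p * qb) * (pb * q * pb) = pb * q * dg (pb * q * pb)
  /\ pb * q * dg (pb * q * pb) = pb * q * pb * dg (p + q * pb)
  /\ pb * q * pb * dg (p + q * pb) = pb * q * pb * dg (q + qb * p)
  /\ pb * q * pb * dg (q + qb * p) = pb * dg (pb * q)
  /\ pb * dg (pb * q) = dg (q * pb) * pb
  /\ dg (q * pb) * pb = pb * dg (q - p) * pb).
Proof.
case: Hp => pp sp; case: Hq => qq sq.
have [u Hu] := kMP_all Hinv Hred pp qq sp sq Hsome.
move=> dg pb qb; rewrite /dg /pb /qb {dg pb qb}.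
have H := Hinv; case: (H) => sK sD sM.
have [sk us uP uQ] := u_facts H pp qq sp sq Hu.
have pp' : (1 - p) * (1 - p) = 1 - p by nc [:: p] 1%N.
have qq' : (1 - q) * (1 - q) = 1 - q by nc [:: q] 1%N.
have sp' := st1B _ H sp.
have sq' := st1B _ H sq.
have Cp := MP_corner H sk sp pp (ltac:(nc [:: p; q] 2%N)) Hu.
have Cq := MP_corner H sk sq qq (ltac:(nc [:: p; q] 2%N)) Hu.
have Cp' := MP_corner H sk sp' pp' (ltac:(nc [:: p; q] 2%N)) Hu.
have Cq' := MP_corner H sk sq' qq' (ltac:(nc [:: p; q] 2%N)) Hu.
have k3 : (1 - p) + (1 - q) - (1 - p) * (1 - q) - (1 - q) * (1 - p) = p + q - p * q - q * p by nc [:: p; q] 2%N.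
have Hu' : is_MP star ((1 - p) + (1 - q) - (1 - p) * (1 - q) - (1 - q) * (1 - p)) u by rewrite k3.
have [y [Hy Yy]] := lemL H Hred pp qq sp sq Hu.
have [y2 [Hy2 Yy2]] := lemL H Hred pp' qq' sp' sq' Hu'.
have d1 : mpinv star (p * (1 - q) * p) = p * u.
  apply: (dgE H); have -> : p * (1 - q) * p = p * (p + q - p * q - q * p) by nc [:: p; q] 2%N.
  exact: Cp.
have d2 : mpinv star (p * (1 - q)) = (1 - q) * p * (p * u).
  apply: (dgE H); have := MP_of_aas (a := p * (1 - q)) H Hred; rewrite sM sp sq'; apply.
  have -> : p * (1 - q) * ((1 - q) * p) = p * (p + q - p * q - q * p) by nc [:: p; q] 2%N.
  exact: Cp.
have d3 : mpinv star ((1 - q) * p) = p * (1 - q) * ((1 - q) * u).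
  apply: (dgE H); have := MP_of_aas (a := (1 - q) * p) H Hred; rewrite sM sp sq'; apply.
  have -> : (1 - q) * p * (p * (1 - q)) = (1 - q) * (p + q - p * q - q * p) by nc [:: p; q] 2%N.
  exact: Cq'.
have d4 : mpinv star (p - q) = (p - q) * u.
  apply: (dgE H); have := MP_of_aas (a := p - q) H Hred; rewrite (starB H) sp sq; apply.
  have -> : (p - q) * (p - q) = p + q - p * q - q * p by nc [:: p; q] 2%N.
  exact: Hu.
have d5 : mpinv star (1 - p * q) = y by apply: (dgE H).
have d6 : mpinv star (1 - q * p) = star y.
  apply: (dgE H); have := MP_star H Hy; by rewrite (starB H) (star1 H) sM sp sq.
have d7 : mpinv star (p + (1 - p) * q) = y2.
  apply: (dgE H); have -> : p + (1 - p) * q = 1 - (1 - p) * (1 - q) by nc [:: p; q] 2%N.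
  exact: Hy2.
have d8 : mpinv star (q + p * (1 - q)) = y2.
  apply: (dgE H); have -> : q + p * (1 - q) = 1 - (1 - p) * (1 - q) by nc [:: p; q] 2%N.
  exact: Hy2.
have d9 : mpinv star ((1 - p) * q * (1 - p)) = (1 - p) * u.
  apply: (dgE H); have -> : (1 - p) * q * (1 - p) = (1 - p) * (p + q - p * q - q * p) by nc [:: p; q] 2%N.
  exact: Cp'.
have Hy2s := MP_star H Hy2.
rewrite (starB H) (star1 H) sM sp' sq' in Hy2s.
have d10 : mpinv star (p + q * (1 - p)) = star y2.
  apply: (dgE H); have -> : p + q * (1 - p) = 1 - (1 - q) * (1 - p) by nc [:: p; q] 2%N.
  exact: Hy2s.
have d11 : mpinv star (q + (1 - q) * p) = star y2.
  apply: (dgE H); have -> : q + (1 - q) * p = 1 - (1 - q) * (1 - p) by nc [:: p; q] 2%N.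
  exact: Hy2s.
have d12 : mpinv star ((1 - p) * q) = q * (1 - p) * ((1 - p) * u).
  apply: (dgE H); have := MP_of_aas (a := (1 - p) * q) H Hred; rewrite sM sp' sq; apply.
  have -> : (1 - p) * q * (q * (1 - p)) = (1 - p) * (p + q - p * q - q * p) by nc [:: p; q] 2%N.
  exact: Cp'.
have d13 : mpinv star (q * (1 - p)) = (1 - p) * q * (q * u).
  apply: (dgE H); have := MP_of_aas (a := q * (1 - p)) H Hred; rewrite sM sp' sq; apply.
  have -> : q * (1 - p) * ((1 - p) * q) = q * (p + q - p * q - q * p) by nc [:: p; q] 2%N.
  exact: Cq.
have d14 : mpinv star (q - p) = (q - p) * u.
  apply: (dgE H); have := MP_of_aas (a := q - p) H Hred; rewrite (starB H) sp sq; apply.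
  have -> : (q - p) * (q - p) = p + q - p * q - q * p by nc [:: p; q] 2%N.
  exact: Hu.
have Y1 : y * (p * (1 - q) * p) = p * (1 - q) * p * u.
  have -> : p * (1 - q) * p = p - p * q * p by nc [:: p; q] 2%N.
  exact: Yy.
have sA : star (p * (1 - q) * p) = p * (1 - q) * p by rewrite (stM3 _ _ _ H) sp sq'.
have Y1s : p * (1 - q) * p * star y = u * (p * (1 - q) * p).
  by have := f_equal star Y1; rewrite sM sA sM us sA.
have Y2 : y2 * ((1 - p) * q * (1 - p)) = (1 - p) * q * (1 - p) * u.
  have -> : (1 - p) * q * (1 - p) = (1 - p) - (1 - p) * (1 - q) * (1 - p) by nc [:: p; q] 2%N.
  exact: Yy2.
have sB : star ((1 - p) * q * (1 - p)) = (1 - p) * q * (1 - p) by rewrite (stM3 _ _ _ H) sp' sq.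
have Y2s : (1 - p) * q * (1 - p) * star y2 = u * ((1 - p) * q * (1 - p)).
  by have := f_equal star Y2; rewrite sM sB sM us sB.
split; [split|].
- by rewrite d5 d1 Y1; ncc [:: p; q] 2%N [:: u] 1%N.
- by rewrite d1 d6 Y1s; ncc [:: p; q] 2%N [:: u] 1%N.
- by rewrite d6 Y1s d2; ncc [:: p; q] 2%N [:: u] 1%N.
- by rewrite d2 d3; ncc [:: p; q] 2%N [:: u] 1%N.
- by rewrite d3 d4; ncc [:: p; q] 2%N [:: u] 1%N.
- rewrite d7 d8 d9 d10 d11 d12 d13 d14 Y2 Y2s.
  split; first by [].
  split; first by ncc [:: p; q] 2%N [:: u] 1%N.
  split; first by ncc [:: p; q] 2%N [:: u] 1%N.
  split; first by [].
  split; first by ncc [:: p; q] 2%N [:: u] 1%N.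
  split; by ncc [:: p; q] 2%N [:: u] 1%N.
Qed.
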